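(* In any iteration of Algorithm 1, if there exist an integer $m\ge1$ and an index $j\in\{1,\dots,n\}$ such that $i^*=b^m(j)$, then $\mathrm{avg}(j,b(i^* ))<\mathrm{avg}(j,i^* )$.
   Context: Problem (P): given an integer $n\ge1$, reals $0<q_1\le\cdots\le q_n$, $z_1,\dots,z_n>0$ and $K>0$, maximize $\sum_{i=1}^n x_i$ subject to $0\le x_i\le q_i$, $0\le x_1\le\cdots\le x_n$, $\sum_{i=1}^n z_ix_i\le K$. For $1\le i<j\le n+1$ let $\mathrm{sum}(i,j)=z_i+\cdots+z_{j-1}$ and $\mathrm{avg}(i,j)=\mathrm{sum}(i,j)/(j-i)$. Algorithm 1 (run on an instance of (P)): Initialize $S=\{0,n+1\}$, $y_i=\mathrm{avg}(i,n+1)$ and $x_i=0$ for $i=1,\dots,n$, and $\hat B=K$. While $\hat B>0$ and $S\ne\{0,1,\dots,n+1\}$, perform an iteration: let $i^*$ be the index $i\in\{1,\dots,n\}\setminus S$ minimizing $y_i$, ties broken in favour of the smallest index; let $i_L=\max\{j\in S:j<i^*\}$ and $i_R=\min\{j\in S:j>i^*\}$; set $d=\min\{\hat B/((i_R-i^* )y_{i^*}),\ q_{i^*}-x_{i^*}\}$; set $\hat B\leftarrow\hat B-d(i_R-i^* )y_{i^*}$; set $x_i\leftarrow x_i+d$ for all $i^*\le i<i_R$; set $y_i\leftarrow\mathrm{avg}(i,i^* )$ for all $i_L<i<i^*$; add $i^*$ to $S$. Finally output $x_1,\dots,x_n$. Blocker: for $1\le i\le n$, $b(i)$ is the value of $i^*$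 in the last iteration in which $y_i$ is updated (i.e. the last iteration with $i_L<i<i^*$); if $y_i$ is never updated, $b(i)=n+1$. Iterates: $b^0$ is the identity and $b^m(i)=b(b^{m-1}(i))$ (defined as long as $b^{m-1}(i)\le n$). *)

(* Defs.v *)
From HB Require Import structures.
From mathcomp Require Import all_boot all_order all_algebra.
Set Implicit Arguments. Unset Strict Implicit. Unset Printing Implicit Defensive.
Import Order.TTheory GRing.Theory Num.Theory.
Local Open Scope ring_scope.

Section Alg1.
Variable R : realFieldType.
Variable n : nat.
Variables (q z : nat -> R) (K : R).

Definition sumz (i j : nat) : R := \sum_(i <= k < j) z k.
Definition avg (i j : nat) : R := sumz i j / (j - i)%:R.

(* State of Algorithm 1: the set S (as a boolean predicate on nat),
   the vectors y and x (indexed by 1..n), and the budget B^. *)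
Record state := State { stS : nat -> bool; sty : nat -> R; stx : nat -> R; stB : R }.

Definition init : state :=
  State (fun k => (k == 0)%N || (k == n.+1)) (fun i => avg i n.+1) (fun _ => 0) K.

(* loop condition: B^ > 0 and S <> {0,1,...,n+1} (0 and n+1 always lie in S) *)
Definition cont (st : state) : bool :=
  (0 < stB st) && has (fun i => ~~ stS st i) (iota 1 n).

(* i* : the index i in {1..n} \ S minimizing y_i, smallest such index on ties *)
Definition istar (st : state) : nat :=
  head 0%N [seq i <- iota 1 n | ~~ stS st i &&
                 all (fun k => stS st k || (sty st i <= sty st k)) (iota 1 n)].

Definition iL (st : state) (i : nat) : nat := last 0%N [seq j <- iota 0 i | stS st j].
Definition iR (st : state) (i : nat) : nat :=
  head n.+1 [seq j <- iota i.+1 (n.+1 - i) | stS st j].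

Definition step (st : state) : state :=
  let i := istar st in
  let L := iL st i in
  let Rr := iR st i in
  let d := Num.min (stB st / ((Rr - i)%:R * sty st i)) (q i - stx st i) in
  State (fun k => stS st k || (k == i))
        (fun k => if (L < k < i)%N then avg k i else sty st k)
        (fun k => if (i <= k < Rr)%N then stx st k + d else stx st k)
        (stB st - d * (Rr - i)%:R * sty st i).

Definition step_if (st : state) : state := if cont st then step st else st.

(* state before iteration t (0-indexed) *)
Definition run (t : nat) : state := iter t step_if init.

Definition performed (t : nat) : bool := all (fun s => cont (run s)) (iota 0 t.+1).

Definition updates (t i : nat) : bool :=
  (iL (run t) (istar (run t)) < i < istar (run t))%N.

(* Algorithm 1 performs at most n iterations (each adds a new element of {1..n} to S),
   so it suffices to search iterations 0..n-1. *)
Definition blocker (i : nat) : nat :=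
  let ts := [seq t <- iota 0 n | performed t && updates t i] in
  if ts is [::] then n.+1 else istar (run (last 0%N ts)).

End Alg1.

(* Main.v *)
Require Import Defs.
From HB Require Import structures.
From mathcomp Require Import all_boot all_order all_algebra.
From mathcomp Require Import zify ring.
Import Order.TTheory GRing.Theory Num.Theory.
Local Open Scope ring_scope.

Lemma hfi (p : pred nat) a m d : has p (iota a m) ->
  let x := head d [seq k <- iota a m | p k] in
  [/\ (a <= x < a + m)%N, p x & forall k, (a <= k < x)%N -> ~~ p k].
Proof.
elim: m a => [|m IH] a //= H.
case pa: (p a) => /=.
  split => //; [lia| move=> k; lia].
rewrite pa /= in H.
have [H1 H2 H3] := IH a.+1 H.
split => //; first lia.
move=> k Hk; case: (k =P a) => [->|ne]; first by rewrite pa.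
apply: H3; lia.
Qed.

Lemma lfi (p : pred nat) i : p 0%N -> (1 <= i)%N ->
  let x := last 0%N [seq k <- iota 0 i | p k] in
  [/\ (x < i)%N, p x & forall k, (x < k < i)%N -> ~~ p k].
Proof.
move=> p0; elim: i => [|i IH] // _.
rewrite -addn1 iotaD filter_cat last_cat add0n /=.
case pi: (p i) => /=.
  split => //; [lia| move=> k; lia].
case: i IH pi => [|i] IH pi; first by rewrite pi in p0.
have [H1 H2 H3] := IH isT.
split => //; first lia.
move=> k Hk; case: (k =P i.+1) => [->|ne]; first by rewrite pi.
apply: H3; lia.
Qed.

Lemma exmin {R : realFieldType} (s : seq nat) (P : pred nat) (f : nat -> R) :
  has P s -> exists x, [/\ x \in s, P x & forall k, k \in s -> P k -> f x <= f k].
Proof.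
elim: s => [|a s IH] //= /orP [Pa|Hs].
  case Hh: (has P s).
    have [x [xs Px Hx]] := IH Hh.
    case: (leP (f a) (f x)) => [le|lt].
      exists a; split => //; first by rewrite inE eqxx.
      move=> k; rewrite inE => /orP [/eqP ->|ks] Pk //.
      exact: le_trans le (Hx _ ks Pk).
    exists x; split => //; first by rewrite inE xs orbT.
    move=> k; rewrite inE => /orP [/eqP ->|ks] Pk; first exact: ltW.
    exact: Hx.
  exists a; split => //; first by rewrite inE eqxx.
  move=> k; rewrite inE => /orP [/eqP ->|ks] Pk //.
  by move/hasPn: Hh => /(_ _ ks); rewrite Pk.
have [x [xs Px Hx]] := IH Hs.
case: (boolP (P a)) => Pa.
  case: (leP (f a) (f x)) => [le|lt].
    exists a; split => //; first by rewrite inE eqxx.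
    move=> k; rewrite inE => /orP [/eqP ->|ks] Pk //.
    exact: le_trans le (Hx _ ks Pk).
  exists x; split => //; first by rewrite inE xs orbT.
  move=> k; rewrite inE => /orP [/eqP ->|ks] Pk; first exact: ltW.
  exact: Hx.
exists x; split => //; first by rewrite inE xs orbT.
move=> k; rewrite inE => /orP [/eqP ->|ks] Pk; first by rewrite Pk in Pa.
exact: Hx.
Qed.

Lemma count_lt (p p' : pred nat) (s : seq nat) :
  (forall x, p x -> p' x) -> (exists2 x, x \in s & p' x && ~~ p x) ->
  (count p s < count p' s)%N.
Proof.
move=> H; elim: s => [|a s IH] [x]; rewrite ?inE //= => /orP [/eqP ->|xs] Hx.
  case/andP: Hx => -> /negbTE -> /=.
  have : (count p s <= count p' s)%N by apply: sub_count.
  lia.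
have := IH (ex_intro2 _ _ x xs Hx).
case: (p a) (H a) => [->//|_]; case: (p' a) => /=; lia.
Qed.

Lemma mix (R : realFieldType) (s1 s2 p r : R) : 0 < p -> 0 < r ->
  ((s1 + s2) / (p + r) - s2 / r = (s1 / p - s2 / r) * (p / (p + r))) /\
  (s1 / p - (s1 + s2) / (p + r) = (s1 / p - s2 / r) * (r / (p + r))).
Proof.
move=> hp hr.
have hpr : p + r != 0 by apply/lt0r_neq0; rewrite addr_gt0.
have hp' : p != 0 by rewrite gt_eqF.
have hr' : r != 0 by rewrite gt_eqF.
split; field; by rewrite ?hpr ?hp' ?hr'.
Qed.
Section Main.
Variable R : realFieldType.
Variable n : nat.
Variables (q z : nat -> R) (K : R).

Notation run := (run n q z K).
Notation cont := (cont n).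
Notation S t := (stS (run t)).

Lemma run_stat k t : ~~ cont (run t) -> run (k + t) = run t.
Proof.
move=> H; elim: k => //= k IH.
by rewrite /step_if IH (negbTE H).
Qed.

Lemma cont_perf t : cont (run t) = performed n q z K t.
Proof.
apply/idP/idP; last first.
  by move/allP => /(_ t); apply; rewrite mem_iota; lia.
move=> H; apply/allP => s; rewrite mem_iota => Hs.
apply/negPn/negP => Hn.
have := run_stat (t - s) s Hn; rewrite subnK; last lia.
by move=> E; rewrite E (negbTE Hn) in H.
Qed.

Lemma runS t : run t.+1 = step_if n q z (run t).
Proof. by []. Qed.

Lemma S_mono t k i : S t i -> S (k + t) i.
Proof.
move=> H; elim: k => //= k IH.
rewrite /step_if; case: (cont _) => //=.
by rewrite IH.
Qed.

Lemma istar_spec (st : state R) : cont st ->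
  let c := istar n st in
  [/\ (1 <= c <= n)%N, ~~ stS st c,
      (forall k, (1 <= k <= n)%N -> ~~ stS st k -> sty st c <= sty st k) &
      (forall k, (1 <= k < c)%N -> ~~ stS st k -> sty st c < sty st k)].
Proof.
case/andP => _ Hh /=.
set p := fun i => ~~ stS st i &&
   all (fun k => stS st k || (sty st i <= sty st k)) (iota 1 n).
have [x [xs Px Hx]] := @exmin R _ _ (sty st) Hh.
have hp : has p (iota 1 n).
  apply/hasP; exists x => //; rewrite /p Px /=.
  apply/allP => k ks; case: (boolP (stS st k)) => //= Sk; exact: Hx.
have [H1 H2 H3] := hfi _ _ _ 0%N hp.
rewrite /istar -/p.
set c := head _ _ in H1 H2 H3 *.
case/andP: H2 => Sc Hc.
split => //; try lia.
  move=> k Hk Sk; move/allP: Hc => /(_ k); rewrite (negbTE Sk) /=; apply.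
  by rewrite mem_iota; lia.
move=> k Hk Sk.
have := H3 k Hk; rewrite /p Sk /= => /allPn [k' k's].
rewrite negb_or => /andP [Sk']; rewrite -ltNge => lt.
move/allP: Hc => /(_ k' k's); rewrite (negbTE Sk') /= => le.
exact: le_lt_trans le lt.
Qed.

Lemma iR_spec (st : state R) i : stS st n.+1 -> (i <= n)%N ->
  let x := iR n st i in
  [/\ (i < x <= n.+1)%N, stS st x & forall k, (i < k < x)%N -> ~~ stS st k].
Proof.
move=> Sn hi.
have hp : has (stS st) (iota i.+1 (n.+1 - i)).
  apply/hasP; exists n.+1 => //; rewrite mem_iota; lia.
have [H1 H2 H3] := hfi _ _ _ n.+1 hp.
rewrite /iR; split => //; try lia.
Qed.

Lemma iR_uniq (st : state R) i x : stS st n.+1 -> (i <= n)%N -> (i < x)%N -> stS st x ->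
  (forall k, (i < k < x)%N -> ~~ stS st k) -> iR n st i = x.
Proof.
move=> Sn hi hx Sx Hx.
have [H1 H2 H3] := iR_spec _ _ Sn hi.
case: (ltngtP (iR n st i) x) => // lt.
  have : (i < iR n st i < x)%N by lia.
  by move/Hx; rewrite H2.
have : (i < x < iR n st i)%N by lia.
by move/H3; rewrite Sx.
Qed.

Lemma iL_spec (st : state R) i : stS st 0%N -> (1 <= i)%N ->
  let x := iL st i in
  [/\ (x < i)%N, stS st x & forall k, (x < k < i)%N -> ~~ stS st k].
Proof. move=> S0 hi; exact: lfi. Qed.

End Main.

Section Inv.
Variable R : realFieldType.
Variable n : nat.
Variables (q z : nat -> R) (K : R).

Notation run := (run n q z K).
Notation cont := (cont n).
Notation S t := (stS (run t)).

Definition cbl t i :=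
  let ts := [seq s <- iota 0 t | performed n q z K s && updates n q z K s i] in
  if ts is [::] then n.+1 else istar n (run (last 0%N ts)).

Lemma blocker_cbl i : blocker n q z K i = cbl n i.
Proof. by []. Qed.

Lemma cbl_step t i : cbl t.+1 i =
  if performed n q z K t && updates n q z K t i then istar n (run t) else cbl t i.
Proof.
rewrite /cbl -addn1 iotaD filter_cat add0n /=.
case: (_ && _) => /=; last by rewrite cats0.
by case: [seq _ <- _ | _] => //= a l; rewrite last_cat.
Qed.

Definition Inv t := [/\ S t 0%N, S t n.+1 &
  forall i, (1 <= i <= n)%N -> ~~ S t i ->
    sty (run t) i = avg z i (iR n (run t) i) /\ iR n (run t) i = cbl t i].

Lemma inv_all t : Inv t.
Proof.
elim: t => [|t [S0 Sn IH]].
  rewrite /Inv /=; split; rewrite ?eqxx ?orbT // => i hi _.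
  have E : iR n (init n z K) i = n.+1.
    apply: iR_uniq; rewrite /= ?eqxx ?orbT //; try lia.
  by rewrite E.
case C: (cont (run t)); last first.
  have E : run t.+1 = run t by rewrite runS /step_if C.
  rewrite /Inv E; split => // i hi Si.
  rewrite cbl_step -cont_perf C /=; exact: IH.
have E : run t.+1 = step n q z (run t) by rewrite runS /step_if C.
have [c1 Sc cle clt] := @istar_spec _ _ _ C.
have [L1 SL L3] := @iL_spec _ _ (istar n (run t)) S0 (proj1 (andP c1)).
rewrite /Inv E /step.
set st' := State _ _ _ _.
set c := istar n (run t) in c1 Sc cle clt L1 SL L3 *.
set L := iL (run t) c in L1 SL L3 *.
have SS : forall k, stS st' k = S t k || (k == c) by [].
have SY : forall k, sty st' k = if (L < k < c)%N then avg z k c else sty (run t) k by [].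
rewrite !SS S0 Sn; split => //.
move=> i hi; rewrite SS negb_or => /andP [Si nic].
rewrite cbl_step -cont_perf C /= /updates -/c -/L.
have [R1 R2 R3] := @iR_spec _ _ _ _ Sn (proj2 (andP hi)).
case U: (L < i < c)%N.
  have E' : iR n st' i = c.
    apply: iR_uniq; rewrite ?SS ?Sn ?eqxx ?orbT //; try lia.
    move=> k hk; rewrite negb_or L3; last lia.
    by apply/eqP; lia.
  by rewrite E'.
have E' : iR n st' i = iR n (run t) i.
  apply: iR_uniq; rewrite ?SS ?Sn ?R2 //; try lia.
  move=> k hk; rewrite negb_or R3 //=.
  apply/eqP => ekc; subst k.
  have iL' : (i < L)%N.
    case: (ltngtP i L) => // [hiL|eiL]; first by rewrite hiL /= in U; lia.
    by rewrite eiL SL in Si.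
  have := R3 L; rewrite SL => /(_ _) H; by have := H ltac:(lia).
rewrite E'; exact: IH.
Qed.

End Inv.

Section Fin.
Variable R : realFieldType.
Variable n : nat.
Variables (q z : nat -> R) (K : R).

Notation run := (run n q z K).
Notation cont := (cont n).
Notation S t := (stS (run t)).

Lemma cont_prev t : cont (run t.+1) -> cont (run t).
Proof.
apply: contraLR => C; by rewrite runS /step_if (negbTE C).
Qed.

Lemma cnt_ge t : cont (run t) -> (t <= count (S t) (iota 1 n))%N.
Proof.
elim: t => // t IH C1.
have C := cont_prev t C1.
have := IH C.
have [c1 Sc _ _] := @istar_spec _ _ _ C.
have E : run t.+1 = step n q z (run t) by rewrite runS /step_if C.
suff : (count (S t) (iota 1 n) < count (S t.+1) (iota 1 n))%N by lia.
apply: count_lt.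
  by move=> x; rewrite E /= => ->.
exists (istar n (run t)); first by rewrite mem_iota; lia.
by rewrite E /= eqxx orbT Sc.
Qed.

Lemma cont_lt t : cont (run t) -> (t < n)%N.
Proof.
move=> C; have := cnt_ge t C.
case/andP: C => _ /hasP [x xs Sx].
have H1 := count_predC (S t) (iota 1 n).
have : (0 < count (predC (S t)) (iota 1 n))%N.
  by rewrite -has_count; apply/hasP; exists x.
rewrite size_iota in H1; lia.
Qed.

End Fin.

Lemma avg_mix (R : realFieldType) (z : nat -> R) a b c : (a < b < c)%N ->
  exists k1 k2 : R, [/\ 0 < k1, 0 < k2,
    avg z a c - avg z b c = (avg z a b - avg z b c) * k1 &
    avg z a b - avg z a c = (avg z a b - avg z b c) * k2].
Proof.
move=> h.
have hp : (0 : R) < (b - a)%:R by rewrite ltr0n; lia.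
have hr : (0 : R) < (c - b)%:R by rewrite ltr0n; lia.
have [E1 E2] := @mix _ (sumz z a b) (sumz z b c) _ _ hp hr.
have Es : sumz z a c = sumz z a b + sumz z b c.
  by rewrite /sumz (big_cat_nat _ (n:=b)) //; lia.
have En : (c - a)%:R = (b - a)%:R + (c - b)%:R :> R.
  by rewrite -natrD; congr (_%:R); lia.
exists ((b - a)%:R / ((b - a)%:R + (c - b)%:R)), ((c - b)%:R / ((b - a)%:R + (c - b)%:R)).
split; try by apply: divr_gt0 => //; rewrite addr_gt0.
  by rewrite /avg Es En E1.
by rewrite /avg Es En E2.
Qed.

Lemma mixA (R : realFieldType) (z : nat -> R) a b c : (a < b < c)%N ->
  avg z b c < avg z a b -> avg z b c < avg z a c /\ avg z a c < avg z a b.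
Proof.
move=> h lt; have [k1 [k2 [h1 h2 E1 E2]]] := @avg_mix _ z _ _ _ h.
rewrite -subr_gt0 in lt.
split; rewrite -subr_gt0; [rewrite E1| rewrite E2]; exact: mulr_gt0.
Qed.

Lemma mixB (R : realFieldType) (z : nat -> R) a b c : (a < b < c)%N ->
  avg z b c < avg z a c -> avg z b c < avg z a b.
Proof.
move=> h lt; have [k1 [k2 [h1 h2 E1 E2]]] := @avg_mix _ z _ _ _ h.
by rewrite -subr_gt0 E1 pmulr_lgt0 // subr_gt0 in lt.
Qed.

Section Final.
Variable R : realFieldType.
Variable n : nat.
Variables (q z : nat -> R) (K : R).

Notation run := (run n q z K).
Notation cont := (cont n).
Notation S t := (stS (run t)).
Notation B := (blocker n q z K).

Lemma blk_spec a : (B a <= n)%N -> exists T,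
  [/\ (T < n)%N, cont (run T), updates n q z K T a & B a = istar n (run T)].
Proof.
rewrite blocker_cbl /cbl /=.
case Hts: [seq _ <- _ | _] => [|x l]; first lia.
move=> _; exists (last x l).
have := mem_last x l; rewrite -Hts mem_filter mem_iota => /andP [/andP [P U] I].
split => //; try lia; first by move: P; rewrite -cont_perf.
by rewrite Hts.
Qed.

Lemma b_gt a : (a <= n)%N -> (a < B a)%N.
Proof.
move=> ha; case: (leqP (B a) n) => [/blk_spec [T [_ _ U ->]]|]; last lia.
by move: U; rewrite /updates => /andP [_].
Qed.

Lemma b_of_istar T : cont (run T) ->
  B (istar n (run T)) = iR n (run T) (istar n (run T)).
Proof.
move=> C.
have Tn := @cont_lt _ _ _ _ _ _ C.
have [c1 Sc _ _] := @istar_spec _ _ _ C.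
set c := istar n (run T) in c1 Sc *.
have [S0 Sn IH] := @inv_all _ n q z K T.
rewrite (proj2 (IH c c1 Sc)) blocker_cbl /cbl.
rewrite (_ : iota 0 n = iota 0 T ++ iota T (n - T)); last first.
  by rewrite -iotaD subnKC // ltnW.
rewrite filter_cat.
have -> : [seq s <- iota T (n - T) | performed n q z K s && updates n q z K s c] = [::].
  apply/eqP; rewrite -[_ == _]negbK -has_filter; apply/hasPn => s.
  rewrite mem_iota => hs; rewrite -cont_perf; apply/negP => /andP [Cs].
  rewrite /updates.
  case: (ltngtP s T) => [|gt|eq]; first lia; last first.
    by rewrite eq -/c ltnn andbF.
  have Ssc : S s c.
    have := @S_mono _ n q z K T.+1 (s - T.+1) c.
    rewrite subnK // runS /step_if C /= eqxx orbT; by apply.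
  have [S0' _ _] := @inv_all _ n q z K s.
  have [c1' _ _ _] := @istar_spec _ _ _ Cs.
  have [_ _ L3] := @iL_spec _ _ (istar n (run s)) S0' (proj1 (andP c1')).
  by move=> /L3; rewrite Ssc.
by rewrite cats0.
Qed.

Lemma lemD a c : B a = c -> (c <= n)%N -> avg z c (B c) < avg z a c.
Proof.
move=> Ba cn; have [T [Tn C U Ec]] := blk_spec a (leq_trans (eq_leq Ba) cn).
rewrite Ba in Ec.
have [S0 Sn IH] := @inv_all _ n q z K T.
have [c1 Sc cle clt] := @istar_spec _ _ _ C.
rewrite -Ec in c1 Sc cle clt.
have [L1 SL L3] := @iL_spec _ _ c S0 (proj1 (andP c1)).
move: U; rewrite /updates -Ec => U.
have Sa : ~~ S T a by apply: L3.
have a1 : (1 <= a <= n)%N by lia.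
have [R1 R2 R3] := @iR_spec _ _ _ c Sn (proj2 (andP c1)).
set x := iR n (run T) c in R1 R2 R3.
have Eax : iR n (run T) a = x.
  apply: iR_uniq => //; try lia.
  move=> k hk; case: (ltngtP k c) => [kc|ck|->] //.
    by apply: L3; lia.
  by apply: R3; lia.
have ya := IH a a1 Sa; have yc := IH c c1 Sc.
have lt := clt a ltac:(lia) Sa.
rewrite (proj1 ya) (proj1 yc) Eax in lt.
rewrite Ec (b_of_istar T C) -Ec -/x.
apply: (@mixB _ z a c x); first lia.
exact: lt.
Qed.

End Final.

Theorem corollary1 (R : realFieldType) (n : nat) (q z : nat -> R) (K : R) :
  (1 <= n)%N ->
  0 < q 1%N ->
  (forall i, (1 <= i < n)%N -> q i <= q i.+1) ->
  (forall i, (1 <= i <= n)%N -> 0 < z i) ->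
  0 < K ->
  forall (t m j : nat),
    performed n q z K t ->
    (1 <= m)%N ->
    (1 <= j <= n)%N ->
    (forall k, (k < m)%N -> (iter k (blocker n q z K) j <= n)%N) ->
    istar n (run n q z K t) = iter m (blocker n q z K) j ->
    avg z j (blocker n q z K (istar n (run n q z K t)))
      < avg z j (istar n (run n q z K t)).
Proof.
move=> _ _ _ _ _ t m j P m1 j1 Hk Ec.
have C : cont n (run n q z K t) by rewrite cont_perf.
have [c1 _ _ _] := @istar_spec _ _ _ C.
have Hall : forall k, (k <= m)%N -> (iter k (blocker n q z K) j <= n)%N.
  move=> k; rewrite leq_eqVlt => /orP [/eqP ->|]; last exact: Hk.
  by rewrite -Ec; case/andP: c1.
have PP : forall k, (1 <= k <= m)%N ->
    (j < iter k (blocker n q z K) j)%N /\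
    avg z (iter k (blocker n q z K) j) (blocker n q z K (iter k (blocker n q z K) j))
      < avg z j (iter k (blocker n q z K) j).
  elim => // k IH hk.
  case: k IH hk => [|k] IH hk.
    split; first by apply: b_gt; case/andP: j1.
    by apply: lemD => //; apply: (Hall 1%N).
  have [h1 h2] := IH ltac:(lia).
  set c' := iter k.+1 (blocker n q z K) j in h1 h2 *.
  have ce : (c' < blocker n q z K c')%N by apply: b_gt; apply: (Hall k.+1); lia.
  have [A1 _] := @mixA _ z j c' (blocker n q z K c') ltac:(lia) h2.
  have D := @lemD _ n q z K c' (blocker n q z K c') erefl (Hall k.+2 hk).
  have -> : iter k.+2 (blocker n q z K) j = blocker n q z K c' by [].
  split; first lia.
  exact: lt_trans D A1.
have [h1 h2] := PP m ltac:(lia).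
rewrite Ec.
have ce := @b_gt _ n q z K _ (Hall m (leqnn m)).
have [_ A2] := @mixA _ z j (iter m (blocker n q z K) j) (blocker n q z K (iter m (blocker n q z K) j)) ltac:(lia) h2.
exact: A2.
Qed.
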